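(* Let $\mathfrak{plc}_I$ be a tropical plactic algebra with totally ordered set of generators $\{\mathfrak a_i : i\in I\}$. Then for all generators $\mathfrak a,\mathfrak b,\mathfrak c$: (KN1) $\mathfrak a\,\mathfrak c\,\mathfrak b=\mathfrak c\,\mathfrak a\,\mathfrak b$ whenever $\mathfrak a\le \mathfrak b<\mathfrak c$; (KN2) $\mathfrak b\,\mathfrak a\,\mathfrak c=\mathfrak b\,\mathfrak c\,\mathfrak a$ whenever $\mathfrak a<\mathfrak b\le \mathfrak c$. Consequently, the multiplicative monoid of $\mathfrak{plc}_I$ satisfies the plactic (Knuth) relations on its generators, i.e. the monoid morphism from the free monoid on the ordered alphabet $\{\mathfrak a_i\}$ to $(\mathfrak{plc}_I,\cdot)$ factors through the plactic monoid.
   Context: A tropical plactic algebra (troplactic algebra) $\mathfrak{plc}_I$ ($I\subseteq\mathbb N$ nonempty) is an idempotent semiring $(\mathfrak{plc}_I,+,\cdot)$ (addition commutative, associative, with $\mathfrak u+\mathfrak u=\mathfrak u$ for all $\mathfrak u$; multiplication associative, possibly noncommutative, with identity $\mathfrak e$; a zero $\mathfrak o$ which is the additive identity and multiplicatively absorbing; multiplication distributes over addition on both sides), generated as a semiring by a totally ordered set of elements $\{\mathfrak a_i: i\in I\}$, such that for all generators $\mathfrak a\le\mathfrak b\le\mathfrak c$: (TPA1) $\mathfrak a=\mathfrak e+\mathfrak a$; (TPA2) $\mathfrak b\mathfrak a=\mathfrak a+\mathfrak b$ when $\mathfrak b>\mathfrak a$; (TPA3) $\mathfrak a(\mathfrak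 b+\mathfrak c)=\mathfrak a\mathfrak b+\mathfrak c$; (TPA4) $(\mathfrak a+\mathfrak b)\mathfrak c=\mathfrak a+\mathfrak b\mathfrak c$. The plactic monoid on an ordered alphabet is the free monoid modulo the congruence generated by the Knuth relations $xzy=zxy$ ($x\le y<z$) and $yxz=yzx$ ($x<y\le z$). *)

(* Defs.v *)
From HB Require Import structures.
From mathcomp Require Import all_boot all_order all_algebra.
Set Implicit Arguments. Unset Strict Implicit. Unset Printing Implicit Defensive.
Import GRing.Theory.
Local Open Scope ring_scope.

Inductive gen_by (R : pzSemiRingType) (I : pred nat) (a : nat -> R) : R -> Prop :=
  | gen_zero : gen_by I a 0
  | gen_one : gen_by I a 1
  | gen_gen i : I i -> gen_by I a (a i)
  | gen_add x y : gen_by I a x -> gen_by I a y -> gen_by I a (x + y)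
  | gen_mul x y : gen_by I a x -> gen_by I a y -> gen_by I a (x * y).

Definition is_troplactic (R : pzSemiRingType) (I : pred nat) (a : nat -> R) : Prop :=
  [/\ exists i, I i,
      (forall u : R, u + u = u),
      (forall u : R, gen_by I a u) &
  [/\
      (forall i, I i -> a i = 1 + a i),
      (forall i j, I i -> I j -> (i < j)%N -> a j * a i = a i + a j),
      (forall i j k, I i -> I j -> I k -> (i <= j <= k)%N ->
                   a i * (a j + a k) = a i * a j + a k)
    & (forall i j k, I i -> I j -> I k -> (i <= j <= k)%N ->
                   (a i + a j) * a k = a i + a j * a k)]].

Inductive plactic_eq : seq nat -> seq nat -> Prop :=
  | pl_refl w : plactic_eq w w
  | pl_sym w1 w2 : plactic_eq w1 w2 -> plactic_eq w2 w1
  | pl_trans w1 w2 w3 : plactic_eq w1 w2 -> plactic_eq w2 w3 -> plactic_eq w1 w3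
  | pl_knuth1 u v x y z : (x <= y < z)%N ->
      plactic_eq (u ++ [:: x; z; y] ++ v) (u ++ [:: z; x; y] ++ v)
  | pl_knuth2 u v x y z : (x < y <= z)%N ->
      plactic_eq (u ++ [:: y; x; z] ++ v) (u ++ [:: y; z; x] ++ v).

Definition word_eval (R : pzSemiRingType) (a : nat -> R) (w : seq nat) : R :=
  \prod_(i <- w) a i.

(* Main.v *)
Require Import Defs.
From HB Require Import structures.
From mathcomp Require Import all_boot all_order all_algebra.
Local Open Scope ring_scope.
Import GRing.Theory.

Lemma pl_all (I : pred nat) w1 w2 : plactic_eq w1 w2 -> all I w1 = all I w2.
Proof.
elim=> //; clear w1 w2.
- by move=> w1 w2 w3 _ -> _ ->.
- move=> u v x y z _; rewrite !all_cat /=.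
  by case: (I x); case: (I y); case: (I z); rewrite ?andbF ?andbT.
- move=> u v x y z _; rewrite !all_cat /=.
  by case: (I x); case: (I y); case: (I z); rewrite ?andbF ?andbT.
Qed.

Lemma we_cat (R : pzSemiRingType) (a : nat -> R) u s v :
  word_eval a (u ++ s ++ v) = word_eval a u * word_eval a s * word_eval a v.
Proof. by rewrite /word_eval !big_cat /= mulrA. Qed.

Lemma we3 (R : pzSemiRingType) (a : nat -> R) x y z :
  word_eval a [:: x; y; z] = a x * a y * a z.
Proof. by rewrite /word_eval !big_cons big_nil mulr1 mulrA. Qed.

Theorem mainTheorem1 (R : pzSemiRingType) (I : pred nat) (a : nat -> R) :
  is_troplactic I a ->
  [/\ (* KN1 *) (forall i j k, I i -> I j -> I k -> (i <= j < k)%N ->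
                  a i * a k * a j = a k * a i * a j),
      (* KN2 *) (forall i j k, I i -> I j -> I k -> (i < j <= k)%N ->
                  a j * a i * a k = a j * a k * a i)
    & (* factorisation through the plactic monoid *)
      (forall w1 w2 : seq nat, all I w1 -> all I w2 -> plactic_eq w1 w2 ->
         word_eval a w1 = word_eval a w2)].
Proof.
case=> _ idem _ [T1 T2 T3 T4].
have KN1 : forall i j k, I i -> I j -> I k -> (i <= j < k)%N ->
                  a i * a k * a j = a k * a i * a j.
  move=> i j k Ii Ij Ik /andP[hij hjk].
  have hik : (i < k)%N by apply: leq_ltn_trans hij hjk.
  rewrite -mulrA (T2 j k) // (T3 i j k) //; last by rewrite hij (ltnW hjk).
  rewrite (T2 i k) // mulrDl (T2 j k) // addrA.
  congr (_ + _).
  by rewrite {1}(T1 i) // mulrDl mul1r addrC.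
have KN2 : forall i j k, I i -> I j -> I k -> (i < j <= k)%N ->
                  a j * a i * a k = a j * a k * a i.
  move=> i j k Ii Ij Ik /andP[hij hjk].
  have hik : (i < k)%N by apply: leq_trans hij hjk.
  rewrite (T2 i j) // (T4 i j k) //; last by rewrite (ltnW hij) hjk.
  rewrite -mulrA (T2 i k) // mulrDr (T2 i j) // -addrA.
  congr (_ + _).
  by rewrite {1}(T1 k) // mulrDr mulr1.
split=> // w1 w2 H1 _ H.
elim: H H1 => //; clear w1 w2.
- move=> w1 w2 H IH H2; symmetry; apply: IH.
  by rewrite (@pl_all I _ _ H).
- move=> w1 w2 w3 H12 IH12 _ IH23 H1.
  rewrite IH12 // IH23 //. by rewrite -(@pl_all I _ _ H12).
- move=> u v x y z hxyz; move=> /allP Hall.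
  have Ix : I x by apply: Hall; rewrite !mem_cat !inE eqxx ?orbT.
  have Iy : I y by apply: Hall; rewrite !mem_cat !inE eqxx ?orbT.
  have Iz : I z by apply: Hall; rewrite !mem_cat !inE eqxx ?orbT.
  by rewrite !we_cat !we3 (KN1 x y z).
- move=> u v x y z hxyz; move=> /allP Hall.
  have Ix : I x by apply: Hall; rewrite !mem_cat !inE eqxx ?orbT.
  have Iy : I y by apply: Hall; rewrite !mem_cat !inE eqxx ?orbT.
  have Iz : I z by apply: Hall; rewrite !mem_cat !inE eqxx ?orbT.
  by rewrite !we_cat !we3 (KN2 x y z).
Qed.
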